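(* Let $X$ be a real Hausdorff locally convex topological vector space, let $V\subseteq X$ be convex and let $U\subseteq V$ be self-segment-dense in $V$. Then for every subset $\mathcal S\subseteq U$ one has $\operatorname{cl}(\operatorname{co}(\mathcal S)\cap U)=\operatorname{cl}(\operatorname{co}(\mathcal S))$; moreover, $\operatorname{co}(\mathcal S)\cap U$ is self-segment-dense in $\operatorname{co}(\mathcal S)$.
   Context: $\operatorname{co}$ denotes the convex hull and $\operatorname{cl}$ the closure. For $x,y\in X$, $[x,y]=\{x+t(y-x):t\in[0,1]\}$. A set $P$ is dense in $D$ if $D\subseteq\operatorname{cl}(P)$. Definition (self-segment-dense): for a convex set $V\subseteq X$ and $U\subseteq V$, $U$ is self-segment-dense in $V$ if $U$ is dense in $V$ and for all $x,y\in U$ the set $[x,y]\cap U$ is dense in $[x,y]$. *)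

(* Defs.v *)
From Stdlib Require Import Reals.
Open Scope R_scope.

Class LCTVS (X : Type) := {
  vadd : X -> X -> X;
  vscal : R -> X -> X;
  vzero : X;
  vopp : X -> X;
  vadd_assoc : forall x y z, vadd x (vadd y z) = vadd (vadd x y) z;
  vadd_comm : forall x y, vadd x y = vadd y x;
  vadd_0 : forall x, vadd x vzero = x;
  vadd_opp : forall x, vadd x (vopp x) = vzero;
  vscal_1 : forall x, vscal 1 x = x;
  vscal_assoc : forall a b x, vscal a (vscal b x) = vscal (a * b) x;
  vscal_distr_v : forall a x y, vscal a (vadd x y) = vadd (vscal a x) (vscal a y);
  vscal_distr_s : forall a b x, vscal (a + b) x = vadd (vscal a x) (vscal b x);
  is_open : (X -> Prop) -> Prop;
  open_full : is_open (fun _ => True);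
  open_inter : forall A B, is_open A -> is_open B -> is_open (fun x => A x /\ B x);
  open_union : forall (F : (X -> Prop) -> Prop),
      (forall A, F A -> is_open A) -> is_open (fun x => exists A, F A /\ A x);
  vadd_cont : forall x y (W : X -> Prop), is_open W -> W (vadd x y) ->
      exists A B : X -> Prop, is_open A /\ is_open B /\ A x /\ B y /\
        (forall u v, A u -> B v -> W (vadd u v));
  vscal_cont : forall a x (W : X -> Prop), is_open W -> W (vscal a x) ->
      exists (d : R) (A : X -> Prop), 0 < d /\ is_open A /\ A x /\
        (forall b u, Rabs (b - a) < d -> A u -> W (vscal b u));
  hausdorff : forall x y, x <> y ->
      exists A B : X -> Prop, is_open A /\ is_open B /\ A x /\ B y /\
        (forall z, A z -> B z -> False);
  locally_convex : forall W : X -> Prop, is_open W -> W vzero ->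
      exists C : X -> Prop, is_open C /\ C vzero /\
        (forall z, C z -> W z) /\
        (forall x y t, C x -> C y -> 0 <= t <= 1 ->
           C (vadd x (vscal t (vadd y (vopp x)))))
}.

Section Notions.
Context {X : Type} `{LCTVS X}.

Definition segment (x y : X) : X -> Prop :=
  fun z => exists t, 0 <= t <= 1 /\ z = vadd x (vscal t (vadd y (vopp x))).

Definition convex (C : X -> Prop) : Prop :=
  forall x y z, C x -> C y -> segment x y z -> C z.

Definition co (S : X -> Prop) : X -> Prop :=
  fun z => forall C, convex C -> (forall s, S s -> C s) -> C z.

Definition cl (P : X -> Prop) : X -> Prop :=
  fun z => forall O, is_open O -> O z -> exists p, P p /\ O p.

Definition dense (P D : X -> Prop) : Prop := forall z, D z -> cl P z.

Definition self_segment_dense (U V : X -> Prop) : Prop :=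
  dense U V /\
  forall x y, U x -> U y ->
    dense (fun z => segment x y z /\ U z) (segment x y).

End Notions.

(* Main.v *)
Require Import Defs.
From Stdlib Require Import Reals Lra.

Section Aux.
Context {X : Type} `{HX : LCTVS X}.

Lemma scal0 x : vscal 0 x = vzero.
Proof.
  assert (E := vscal_distr_s 0 0 x). rewrite Rplus_0_r in E.
  assert (E2 : vadd (vscal 0 x) (vopp (vscal 0 x)) =
               vadd (vadd (vscal 0 x) (vscal 0 x)) (vopp (vscal 0 x))) by (rewrite <- E; reflexivity).
  rewrite <- vadd_assoc, vadd_opp, vadd_0 in E2. auto.
Qed.

Lemma opp_scal x : vopp x = vscal (-1) x.
Proof.
  assert (E : vadd x (vscal (-1) x) = vzero).
  { rewrite <- (vscal_1 x) at 1. rewrite <- vscal_distr_s.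
    replace (1 + -1) with 0 by ring. apply scal0. }
  rewrite <- (vadd_0 (vopp x)), <- E, vadd_assoc, (vadd_comm (vopp x) x), vadd_opp,
    vadd_comm, vadd_0. reflexivity.
Qed.

Lemma seg_cont t a b (O : X -> Prop) : is_open O ->
  O (vadd a (vscal t (vadd b (vopp a)))) ->
  exists A B : X -> Prop, is_open A /\ is_open B /\ A a /\ B b /\
    forall u v, A u -> B v -> O (vadd u (vscal t (vadd v (vopp u)))).
Proof.
  intros HO Hz.
  destruct (vadd_cont _ _ _ HO Hz) as (A1 & W1 & HA1 & HW1 & A1a & W1w & H1).
  destruct (vscal_cont _ _ _ HW1 W1w) as (d & A2 & Hd & HA2 & A2x & H2).
  destruct (vadd_cont _ _ _ HA2 A2x) as (B & C & HB & HC & Bb & Ca & H3).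
  rewrite opp_scal in Ca.
  destruct (vscal_cont _ _ _ HC Ca) as (d' & A3 & Hd' & HA3 & A3a & H4).
  exists (fun x => A1 x /\ A3 x), B. split; [apply open_inter; auto|].
  split; auto. split; [auto|]. split; auto.
  intros u v [Hu1 Hu3] Hv. apply H1; auto. apply H2.
  - rewrite Rminus_diag, Rabs_R0. auto.
  - apply H3; auto. rewrite opp_scal. apply H4; auto.
    rewrite Rminus_diag, Rabs_R0. auto.
Qed.

Lemma co_convex S : convex (co S).
Proof. intros x y z Hx Hy Hs C HC HS. apply (HC x y z); [apply Hx|apply Hy|]; auto. Qed.

Lemma co_incl S s : S s -> co S s.
Proof. intros Hs C _ HS. auto. Qed.

End Aux.

Theorem mainTheorem1 (X : Type) (HX : LCTVS X) (V U : X -> Prop) :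
  convex V ->
  (forall u, U u -> V u) ->
  self_segment_dense U V ->
  forall S : X -> Prop, (forall s, S s -> U s) ->
    (forall z, cl (fun w => co S w /\ U w) z <-> cl (co S) z) /\
    self_segment_dense (fun w => co S w /\ U w) (co S).
Proof.
  intros _ _ [_ Hseg] S HSU.
  assert (K : forall z, co S z -> cl (fun w => co S w /\ U w) z).
  { intros z Hz.
    set (K := fun z => co S z /\ cl (fun w => co S w /\ U w) z).
    assert (HK : convex K).
    { intros a b c [Ha Hac] [Hb Hbc] Hs. split.
      - apply (co_convex S a b c); auto.
      - destruct Hs as (t & Ht & ->). intros O HO Oz.
        destruct (seg_cont t a b O HO Oz) as (A & B & HA & HB & Aa & Bb & HAB).
        destruct (Hac A HA Aa) as (a' & [Ha'1 Ha'2] & Aa').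
        destruct (Hbc B HB Bb) as (b' & [Hb'1 Hb'2] & Bb').
        assert (Hseg' : segment a' b' (vadd a' (vscal t (vadd b' (vopp a'))))) by
          (exists t; auto).
        destruct (Hseg a' b' Ha'2 Hb'2 _ Hseg' O HO (HAB _ _ Aa' Bb')) as (p & [Hp1 Hp2] & Op).
        exists p. split; auto. split; auto. apply (co_convex S a' b' p); auto. }
    assert (HSK : forall s, S s -> K s).
    { intros s Hs. split. apply co_incl; auto.
      intros O HO Os. exists s. split; auto. split; auto. apply co_incl; auto. }
    exact (proj2 (Hz K HK HSK)). }
  split.
  - intros z. split.
    + intros Hz O HO Oz. destruct (Hz O HO Oz) as (p & [Hp _] & Op). eauto.
    + intros Hz O HO Oz. destruct (Hz O HO Oz) as (p & Hp & Op).
      exact (K p Hp O HO Op).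
  - split.
    + intros z Hz. apply K; auto.
    + intros x y [Hx1 Hx2] [Hy1 Hy2] z Hz O HO Oz.
      destruct (Hseg x y Hx2 Hy2 z Hz O HO Oz) as (p & [Hp1 Hp2] & Op).
      exists p. split; auto. split; auto. split; auto.
      apply (co_convex S x y p); auto.
Qed.
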